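(* There exists a unique increasing function $u\in C^2(\mathbb{R})$ satisfying \[ u''(\xi)=(u(\xi)-\xi)\,u'(\xi),\quad \xi\in\mathbb{R}, \] such that, for some constants $c,C>0$, \[ \max\{0,\xi\}<u(\xi)<\max\{0,\xi\}+Ce^{-c|\xi|}\quad\text{for all }\xi\in\mathbb{R}. \] *)

(* Defs.v *)
From Stdlib Require Import Reals.
From Coquelicot Require Import Coquelicot.
Open Scope R_scope.

Definition C2 (u : R -> R) : Prop :=
  (forall x, ex_derive u x) /\
  (forall x, ex_derive (Derive u) x) /\
  (forall x, continuous (Derive (Derive u)) x).

(* Main.v *)
Require Import Defs.
From Stdlib Require Import Reals Lra Psatz Ranalysis5 FunctionalExtensionality Classical.
From Coquelicot Require Import Coquelicot.
Open Scope R_scope.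

Definition hh (v : R) : R := 2 * (v - 1 - ln v).
Definition W (v : R) : R := sqrt (hh v).
Definition q (v : R) : R := if Rle_dec v 0 then 0 else / W v.

Ltac fixeq := match goal with |- ?a = ?b => change (@eq R a b) end.

Lemma is_derive_eq (f : R -> R) x l l' : is_derive f x l -> l = l' -> is_derive f x l'.
Proof. intros H ->; exact H. Qed.

Lemma deriv_cont_pt (f : R -> R) x l : is_derive f x l -> continuity_pt f x.
Proof.
  intros H. apply continuity_pt_filterlim. apply (ex_derive_continuous f x).
  exists l; exact H.
Qed.

Lemma hh_deriv v : 0 < v -> is_derive hh v (2 * (1 - / v)).
Proof.
  intros Hv. unfold hh. auto_derive. lra. field. lra.
Qed.

Lemma hh_lower v : 0 < v <= 1 -> (1 - v)^2 <= hh v.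
Proof.
  intros [H0 H1].
  destruct (Req_dec v 1) as [->|Hne].
  { unfold hh; rewrite ln_1; lra. }
  set (g := fun t => hh t - (1 - t)^2).
  assert (Hd : forall t, 0 < t -> is_derive g t (2 * (1 - / t) + 2 * (1 - t))).
  { intros t Ht. unfold g. apply is_derive_eq with (2 * (1 - / t) - (2 * (1 - t) * (-1))).
    apply (is_derive_minus hh (fun t => (1-t)^2)). now apply hh_deriv.
    auto_derive; try easy; ring. lra. }
  destruct (MVT_gen g v 1 (fun t => 2 * (1 - / t) + 2 * (1 - t))) as [c [Hc Heq]].
  { intros x Hx. apply Hd. rewrite Rmin_left in Hx; lra. }
  { intros x Hx. eapply deriv_cont_pt. apply Hd. rewrite Rmin_left in Hx; lra. }
  rewrite Rmin_left in Hc by lra. rewrite Rmax_right in Hc by lra.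
  assert (Hg1 : g 1 = 0). { unfold g, hh. rewrite ln_1. ring. }
  assert (Hneg : 2 * (1 - / c) + 2 * (1 - c) <= 0).
  { assert (Hc0 : 0 < c) by lra.
    assert (Hi : c * / c = 1) by (field; lra).
    assert (0 < / c) by (apply Rinv_0_lt_compat; lra).
    assert (0 <= (c - 1)^2 * / c) by (apply Rmult_le_pos; [nra|lra]).
    nra. }
  assert (g v >= 0). { rewrite Hg1 in Heq. nra. }
  unfold g in *. lra.
Qed.

Lemma hh_upper v : 0 < v <= 1 -> hh v <= (1 - v)^2 / v.
Proof.
  intros [H0 H1].
  destruct (Req_dec v 1) as [->|Hne].
  { unfold hh; rewrite ln_1. unfold Rdiv. lra. }
  set (g := fun t => (/ t - 2 + t) - hh t).
  assert (Hd : forall t, 0 < t -> is_derive g t (- (1 - / t)^2)).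
  { intros t Ht. unfold g. apply is_derive_eq with ((- / t ^ 2 + 1) - 2 * (1 - / t)).
    apply (is_derive_minus (fun t => / t - 2 + t) hh). auto_derive; [lra|field; lra].
    now apply hh_deriv. fixeq. field. lra. }
  destruct (MVT_gen g v 1 (fun t => - (1 - / t)^2)) as [c [Hc Heq]].
  { intros x Hx. apply Hd. rewrite Rmin_left in Hx; lra. }
  { intros x Hx. eapply deriv_cont_pt. apply Hd. rewrite Rmin_left in Hx; lra. }
  rewrite Rmin_left in Hc by lra. rewrite Rmax_right in Hc by lra.
  assert (Hg1 : g 1 = 0). { unfold g, hh. rewrite ln_1. field. }
  assert (0 <= (1 - / c)^2 * (1 - v)) by (apply Rmult_le_pos; [apply pow2_ge_0|lra]).
  assert (g v >= 0). { rewrite Hg1 in Heq. nra. }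
  unfold g in *.
  replace ((1 - v)^2 / v) with (/ v - 2 + v) by (field; lra). lra.
Qed.

Lemma hh_pos v : 0 < v < 1 -> 0 < hh v.
Proof. intros Hv. pose proof (hh_lower v ltac:(lra)). nra. Qed.

Lemma W_sq v : 0 < v < 1 -> W v ^ 2 = hh v.
Proof. intros Hv. unfold W. apply pow2_sqrt. pose proof (hh_pos v Hv); lra. Qed.

Lemma W_pos v : 0 < v < 1 -> 0 < W v.
Proof. intros Hv. unfold W. apply sqrt_lt_R0. now apply hh_pos. Qed.

Lemma W_ge v : 0 < v < 1 -> 1 - v <= W v.
Proof.
  intros Hv. unfold W. rewrite <- (sqrt_pow2 (1 - v)) by lra.
  apply sqrt_le_1_alt. apply hh_lower; lra.
Qed.

Lemma W_sq_le v : 0 < v < 1 -> W v ^ 2 <= (1 - v)^2 / v.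
Proof. intros Hv. rewrite W_sq by auto. apply hh_upper; lra. Qed.

Lemma W_deriv v : 0 < v < 1 -> is_derive W v ((1 - / v) / W v).
Proof.
  intros Hv. unfold W.
  apply is_derive_eq with ((2 * (1 - / v)) / (2 * sqrt (hh v))).
  apply is_derive_sqrt. apply hh_deriv; lra. now apply hh_pos.
  fixeq. pose proof (W_pos v Hv). unfold W in H. field. split; lra.
Qed.

Lemma q_eq v : 0 < v -> q v = / W v.
Proof. intros Hv. unfold q. destruct (Rle_dec v 0); [lra|reflexivity]. Qed.

Lemma qW v : 0 < v < 1 -> q v * W v = 1.
Proof. intros Hv. rewrite q_eq by lra. field. pose proof (W_pos v Hv); lra. Qed.

Lemma q_pos v : 0 < v < 1 -> 0 < q v.
Proof. intros Hv. rewrite q_eq by lra. apply Rinv_0_lt_compat. now apply W_pos. Qed.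

Lemma q_nonneg v : v < 1 -> 0 <= q v.
Proof.
  intros Hv. destruct (Rle_dec v 0) as [H|H].
  - unfold q. destruct (Rle_dec v 0); [lra|tauto].
  - apply Rlt_le, q_pos; lra.
Qed.

Lemma q_deriv v : 0 < v < 1 -> is_derive q v (- ((1 - / v) / W v) / W v ^ 2).
Proof.
  intros Hv.
  apply is_derive_ext_loc with (fun y => / W y).
  - apply locally_interval with (Finite 0) (Finite 1); simpl; try lra.
    intros y Hy1 Hy2. rewrite q_eq by lra. reflexivity.
  - apply is_derive_inv. now apply W_deriv. pose proof (W_pos v Hv); lra.
Qed.

Lemma q_cont0 : continuity_pt q 0.
Proof.
  intros eps Heps.
  set (a := Rmin 1 (exp (-1 - / eps ^ 2))).
  assert (Ha : 0 < a) by (unfold a; apply Rmin_glb_lt; [lra|apply exp_pos]).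
  exists a. split; [exact Ha|].
  intros x [_ Hx]. change (R_dist x 0 < a) in Hx. change (R_dist (q x) (q 0) < eps). unfold R_dist in *.
  assert (Hq0 : q 0 = 0) by (unfold q; destruct (Rle_dec 0 0); [reflexivity|lra]).
  rewrite Hq0, Rminus_0_r. rewrite Rminus_0_r in Hx.
  destruct (Rle_dec x 0) as [Hle|Hgt].
  - unfold q. destruct (Rle_dec x 0); [|tauto]. rewrite Rabs_R0; lra.
  - assert (Hx0 : 0 < x) by lra.
    rewrite Rabs_right in Hx by lra.
    assert (Hxa1 : x < 1) by (pose proof (Rmin_l 1 (exp (-1 - / eps ^ 2))) as Hm; fold a in Hm; lra).
    assert (Hxa2 : x < exp (-1 - / eps ^ 2))
      by (pose proof (Rmin_r 1 (exp (-1 - / eps ^ 2))) as Hm; fold a in Hm; lra).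
    assert (Hln : ln x < -1 - / eps ^ 2).
    { rewrite <- (ln_exp (-1 - / eps ^ 2)). apply ln_increasing; lra. }
    assert (Hh : / eps ^ 2 < hh x) by (assert (0 < / eps ^ 2) by (apply Rinv_0_lt_compat; apply pow_lt; lra); unfold hh; lra).
    assert (HW : / eps < W x).
    { unfold W. rewrite <- (sqrt_pow2 (/ eps)) by (apply Rlt_le, Rinv_0_lt_compat; lra).
      apply sqrt_lt_1_alt. split. apply pow2_ge_0.
      replace ((/ eps)^2) with (/ eps ^ 2) by (field; lra). exact Hh. }
    rewrite q_eq by lra.
    assert (0 < / eps) by (apply Rinv_0_lt_compat; lra).
    rewrite Rabs_right by (apply Rle_ge, Rlt_le, Rinv_0_lt_compat; lra).
    rewrite <- (Rinv_inv eps).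
    apply Rinv_lt_contravar. nra. exact HW.
Qed.

Lemma q_cont v : v < 1 -> continuous q v.
Proof.
  intros Hv.
  destruct (Rtotal_order v 0) as [Hn|[H0|Hp]].
  - apply continuous_ext_loc with (fun _ => 0).
    + apply locally_interval with m_infty (Finite 0); simpl; auto.
      intros y _ Hy. unfold q. destruct (Rle_dec y 0); [reflexivity|lra].
    + apply continuous_const.
  - subst. apply continuity_pt_filterlim. apply q_cont0.
  - apply continuity_pt_filterlim. eapply deriv_cont_pt. apply q_deriv. lra.
Qed.

Definition U (v : R) : R := RInt q 0 v.
Definition X (v : R) : R := U v - W v.

Lemma q_exRInt a b : a < 1 -> b < 1 -> ex_RInt q a b.
Proof.
  intros Ha Hb. apply (ex_RInt_continuous (V:=R_CompleteNormedModule)). intros z Hz. apply q_cont.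
  destruct Hz as [_ Hz]. apply Rle_lt_trans with (Rmax a b); auto.
  apply Rmax_lub_lt; auto.
Qed.

Lemma U_deriv v : v < 1 -> is_derive U v (q v).
Proof.
  intros Hv. apply (is_derive_RInt q U 0 v).
  - apply locally_interval with m_infty (Finite 1); simpl; auto.
    intros y _ Hy. unfold U. apply (RInt_correct (V:=R_CompleteNormedModule)). apply q_exRInt; lra.
  - now apply q_cont.
Qed.

Lemma X_deriv v : 0 < v < 1 -> is_derive X v (/ (v * W v)).
Proof.
  intros Hv. unfold X.
  apply is_derive_eq with (q v - (1 - / v) / W v).
  apply (is_derive_minus U W). apply U_deriv; lra. now apply W_deriv.
  fixeq. rewrite q_eq by lra. pose proof (W_pos v Hv). field. split; lra.
Qed.

Lemma Xd_pos v : 0 < v < 1 -> 0 < / (v * W v).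
Proof.
  intros Hv. apply Rinv_0_lt_compat. apply Rmult_lt_0_compat. lra. now apply W_pos.
Qed.

Lemma X_incr x y : 0 < x -> x < y -> y < 1 -> X x < X y.
Proof.
  intros. apply (incr_function X (Finite 0) (Finite 1) (fun v => / (v * W v))); simpl; auto.
  - intros t Ht1 Ht2. apply X_deriv; lra.
  - intros t Ht1 Ht2. apply Xd_pos; lra.
Qed.

Lemma X_cont v : 0 < v < 1 -> continuity_pt X v.
Proof. intros Hv. eapply deriv_cont_pt. now apply X_deriv. Qed.

Lemma U_nonneg v : 0 <= v < 1 -> 0 <= U v.
Proof.
  intros Hv. unfold U. apply RInt_ge_0. lra. apply q_exRInt; lra.
  intros x Hx. apply q_nonneg; lra.
Qed.

Lemma U_pos v : 0 < v < 1 -> 0 < U v.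
Proof.
  intros Hv. unfold U. apply RInt_gt_0. lra.
  intros x Hx. apply q_pos; lra.
  intros x Hx. apply q_cont; lra.
Qed.

Lemma is_RInt_log c a b : a <= b -> b < 1 ->
  is_RInt (fun t => c / (1 - t)) a b (c * (ln (1 - a) - ln (1 - b))).
Proof.
  intros Hab Hb.
  assert (H : is_RInt (fun t => c / (1 - t)) a b (minus ((fun t => - c * ln (1 - t)) b) ((fun t => - c * ln (1 - t)) a))).
  { apply (is_RInt_derive (V:=R_CompleteNormedModule) (fun t => - c * ln (1 - t)) (fun t => c / (1 - t))).
    - intros x Hx. rewrite Rmin_left, Rmax_right in Hx by lra.
      auto_derive. lra. fixeq. field. lra.
    - intros x Hx. rewrite Rmin_left, Rmax_right in Hx by lra.
      apply continuity_pt_filterlim. apply deriv_cont_pt with (c / (1-x)^2).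
      auto_derive. lra. fixeq. field. lra. }
  replace (c * (ln (1 - a) - ln (1 - b))) with (minus ((fun t => - c * ln (1 - t)) b) ((fun t => - c * ln (1 - t)) a)).
  exact H. unfold minus, plus, opp; simpl. ring.
Qed.

Lemma U_le_log v : 0 <= v < 1 -> U v <= - ln (1 - v).
Proof.
  intros Hv.
  pose proof (is_RInt_log 1 0 v ltac:(lra) ltac:(lra)) as H.
  replace (- ln (1 - v)) with (RInt (fun t => 1 / (1 - t)) 0 v).
  2:{ rewrite (is_RInt_unique _ _ _ _ H). rewrite Rminus_0_r, ln_1. lra. }
  unfold U. apply RInt_le. lra. apply q_exRInt; lra. eexists; exact H.
  intros t Ht. rewrite q_eq by lra. unfold Rdiv. rewrite Rmult_1_l.
  apply Rinv_le_contravar. lra. apply W_ge; lra.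
Qed.

Lemma W_le2 v : / 4 <= v < 1 -> W v <= 2 * (1 - v).
Proof.
  intros Hv. pose proof (W_sq_le v ltac:(lra)). pose proof (W_pos v ltac:(lra)).
  assert ((1 - v)^2 / v <= (2 * (1 - v))^2).
  { assert (/ v <= 4). { rewrite <- (Rinv_inv 4). apply Rinv_le_contravar; lra. }
    unfold Rdiv. replace ((2 * (1 - v))^2) with ((1-v)^2 * 4) by ring.
    apply Rmult_le_compat_l. apply pow2_ge_0. exact H1. }
  nra.
Qed.

Lemma U_ge_log v : / 2 <= v < 1 -> / 2 * (ln (1 - / 2) - ln (1 - v)) <= U v.
Proof.
  intros Hv.
  pose proof (is_RInt_log (/2) (/2) v ltac:(lra) ltac:(lra)) as H.
  unfold U. rewrite <- (RInt_Chasles (V:=R_CompleteNormedModule) q 0 (/2) v) by (apply q_exRInt; lra).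
  change (plus ?a ?b) with (a + b).
  pose proof (U_nonneg (/2) ltac:(lra)). unfold U in H0.
  assert (/ 2 * (ln (1 - / 2) - ln (1 - v)) <= RInt q (/ 2) v).
  { rewrite <- (is_RInt_unique _ _ _ _ H).
    apply RInt_le. lra. eexists; exact H. apply q_exRInt; lra.
    intros t Ht. rewrite q_eq by lra.
    pose proof (W_le2 t ltac:(lra)). pose proof (W_pos t ltac:(lra)).
    unfold Rdiv. rewrite <- Rinv_mult. apply Rinv_le_contravar. lra. lra. }
  lra.
Qed.

Lemma ln2_lt1 : ln 2 < 1.
Proof.
  rewrite <- ln_exp with 1. apply ln_increasing. lra.
  pose proof (exp_ineq1 1 ltac:(lra)). lra.
Qed.

Lemma X_surj (xi : R) : {v : R | 0 < v < 1 /\ X v = xi}.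
Proof.
  set (M := Rabs xi + 1).
  set (v1 := Rmin (/2) (exp (-1 - M^2 / 2))).
  set (v2 := 1 - exp (-2 * M - 2) / 2).
  assert (Hv1 : 0 < v1 <= /2).
  { split. unfold v1. apply Rmin_glb_lt. lra. apply exp_pos. apply Rmin_l. }
  assert (He : 0 < exp (-2 * M - 2) < 1).
  { split. apply exp_pos. rewrite <- exp_0. apply exp_increasing. unfold M.
    pose proof (Rabs_pos xi). lra. }
  assert (Hv2 : / 2 <= v2 < 1) by (unfold v2; lra).
  assert (HX1 : X v1 < xi).
  { unfold X.
    pose proof (U_le_log v1 ltac:(lra)).
    assert (- ln (1 - v1) <= ln 2).
    { assert (Hl2 : ln (/2) <= ln (1 - v1)) by (apply ln_le; lra).
      rewrite ln_Rinv in Hl2 by lra. lra. }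
    assert (Hln : ln v1 <= -1 - M^2/2).
    { rewrite <- (ln_exp (-1 - M^2/2)). apply ln_le. lra. apply Rmin_r. }
    assert (M <= W v1).
    { unfold W. rewrite <- (sqrt_pow2 M) by (unfold M; pose proof (Rabs_pos xi); lra).
      apply sqrt_le_1_alt. unfold hh. lra. }
    pose proof ln2_lt1. pose proof (Rle_abs (- xi)) as Hab. rewrite Rabs_Ropp in Hab.
    unfold M in *. lra. }
  assert (HX2 : xi < X v2).
  { unfold X.
    pose proof (U_ge_log v2 Hv2).
    pose proof (W_le2 v2 ltac:(lra)).
    assert (Hl : ln (1 - v2) = -2 * M - 2 + ln (/2)).
    { unfold v2. replace (1 - (1 - exp (-2 * M - 2) / 2)) with (exp (-2 * M - 2) * / 2) by field.
      rewrite ln_mult, ln_exp. reflexivity. apply exp_pos. lra. }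
    rewrite Hl in H.
    replace (1 - /2) with (/2) in H by field.
    pose proof (Rle_abs xi). unfold M in *. lra. }
  assert (Hlt : v1 < v2) by (destruct (Req_dec v1 v2) as [E|E]; [rewrite E in HX1; lra|lra]).
  destruct (Ranalysis5.IVT_interv (fun v => X v - xi) v1 v2) as [v [Hv Hxv]].
  - intros a Ha. apply continuity_pt_minus. apply X_cont. lra. apply continuity_pt_const. intros ? ?; reflexivity.
  - exact Hlt.
  - lra.
  - lra.
  - exists v. split. lra. lra.
Qed.

Definition V (xi : R) : R := proj1_sig (X_surj xi).

Lemma V_range xi : 0 < V xi < 1.
Proof. unfold V. destruct (X_surj xi) as [v [H1 H2]]. simpl. exact H1. Qed.

Lemma XV xi : X (V xi) = xi.
Proof. unfold V. destruct (X_surj xi) as [v [H1 H2]]. simpl. exact H2. Qed.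

Lemma X_inj a b : 0 < a < 1 -> 0 < b < 1 -> X a = X b -> a = b.
Proof.
  intros Ha Hb E. destruct (Rtotal_order a b) as [H|[H|H]]; auto.
  - pose proof (X_incr a b ltac:(lra) H ltac:(lra)). lra.
  - pose proof (X_incr b a ltac:(lra) H ltac:(lra)). lra.
Qed.

Lemma VX v : 0 < v < 1 -> V (X v) = v.
Proof. intros Hv. apply X_inj; auto. apply V_range. apply XV. Qed.

Lemma V_incr x y : x < y -> V x < V y.
Proof.
  intros Hxy. destruct (Rlt_le_dec (V x) (V y)) as [H|H]; auto.
  exfalso. pose proof (V_range x). pose proof (V_range y).
  destruct (Req_dec (V y) (V x)) as [E|E].
  - assert (X (V y) = X (V x)) by (rewrite E; reflexivity). rewrite !XV in H2. lra.
  - pose proof (X_incr (V y) (V x) ltac:(lra) ltac:(lra) ltac:(lra)). rewrite !XV in H2. lra.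
Qed.

Lemma V_le x y : x <= y -> V x <= V y.
Proof. intros H. destruct (Req_dec x y) as [->|E]. lra. apply Rlt_le, V_incr. lra. Qed.

Lemma V_cont xi : continuity_pt V xi.
Proof.
  pose proof (V_range (xi - 1)). pose proof (V_range (xi + 1)).
  pose proof (V_incr (xi - 1) (xi + 1) ltac:(lra)).
  apply (continuity_pt_recip_interv X V (V (xi - 1)) (V (xi + 1)) H1).
  - intros x y Hx Hxy Hy. apply X_incr; lra.
  - intros x _ _. unfold comp, id. apply XV.
  - intros x Hx1 Hx2. rewrite XV in Hx1, Hx2. split; apply V_le; lra.
  - intros a Ha. apply X_cont. lra.
  - rewrite !XV. lra.
Qed.

Lemma V_deriv xi : is_derive V xi (V xi * W (V xi)).
Proof.
  pose proof (V_range (xi - 1)) as R1. pose proof (V_range (xi + 1)) as R2.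
  assert (Prf : forall a, V (xi - 1) <= a <= V (xi + 1) -> derivable_pt X a).
  { intros a Ha. exists (/ (a * W a)). apply is_derive_Reals. apply X_deriv. lra. }
  assert (Hinc : V (xi - 1) <= V xi <= V (xi + 1)) by (split; apply V_le; lra).
  pose proof (V_range xi) as R0.
  assert (Hl : derivable_pt_lim X (V xi) (/ (V xi * W (V xi)))).
  { apply is_derive_Reals. apply X_deriv. lra. }
  pose proof (derivable_pt_lim_recip_interv X V (xi - 1) (xi + 1) xi Prf (V_cont xi)
     ltac:(lra) ltac:(lra) Hinc) as H.
  rewrite (derive_pt_eq_0 X (V xi) _ (Prf (V xi) Hinc) Hl) in H.
  apply is_derive_Reals.
  replace (V xi * W (V xi)) with (1 / / (V xi * W (V xi))).
  apply H.
  - intros x Hx. unfold comp, id. apply XV.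
  - apply Rgt_not_eq, Rlt_gt. apply Xd_pos. exact R0.
  - pose proof (W_pos (V xi) R0). field. split; lra.
Qed.

Definition u0 (xi : R) : R := U (V xi).

Lemma u0_deriv xi : is_derive u0 xi (V xi).
Proof.
  unfold u0. pose proof (V_range xi).
  apply is_derive_eq with (scal (V xi * W (V xi)) (q (V xi))).
  apply (is_derive_comp U V). apply U_deriv; lra. apply V_deriv.
  unfold scal; simpl. unfold mult; simpl. fixeq.
  pose proof (qW (V xi) H). nra.
Qed.

Lemma u0_minus xi : u0 xi - xi = W (V xi).
Proof. unfold u0. rewrite <- (XV xi) at 2. unfold X. ring. Qed.

Lemma Derive_u0 : Derive u0 = V.
Proof. apply functional_extensionality. intros xi. apply is_derive_unique, u0_deriv. Qed.

Lemma Derive_V xi : Derive V xi = V xi * W (V xi).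
Proof. apply is_derive_unique, V_deriv. Qed.

Definition Prop_u (u : R -> R) : Prop :=
    C2 u /\
    (forall x y, x < y -> u x < u y) /\
    (forall xi, Derive (Derive u) xi = (u xi - xi) * Derive u xi) /\
    (exists c C, 0 < c /\ 0 < C /\
       forall xi, Rmax 0 xi < u xi /\ u xi < Rmax 0 xi + C * exp (- c * Rabs xi)).

Lemma W_decr a b : 0 < a -> a < b -> b < 1 -> W b < W a.
Proof.
  intros. assert (- W a < - W b); [|lra].
  apply (incr_function (fun v => - W v) (Finite 0) (Finite 1) (fun v => - ((1 - / v) / W v))); simpl; auto; try lra.
  - intros t Ht1 Ht2. apply (is_derive_opp W). apply W_deriv; lra.
  - intros t Ht1 Ht2. pose proof (W_pos t ltac:(lra)).
    assert (1 < / t). { rewrite <- Rinv_1. apply Rinv_lt_contravar; lra. }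
    unfold Rdiv. assert (0 < / W t) by (apply Rinv_0_lt_compat; lra). nra.
Qed.

Lemma W_le a b : 0 < a -> a <= b -> b < 1 -> W b <= W a.
Proof. intros. destruct (Req_dec a b) as [->|E]. lra. apply Rlt_le, W_decr; lra. Qed.

Lemma U_le_vq v : 0 < v < 1 -> U v <= v / W v.
Proof.
  intros Hv. unfold U.
  replace (v / W v) with (RInt (fun _ => / W v) 0 v).
  2:{ rewrite RInt_const. unfold scal; simpl; unfold mult; simpl. fixeq. field.
      pose proof (W_pos v Hv); lra. }
  apply RInt_le. lra. apply q_exRInt; lra. apply ex_RInt_const.
  intros t Ht. rewrite q_eq by lra. apply Rinv_le_contravar. now apply W_pos.
  apply W_le; lra.
Qed.

Lemma v_le_exp v : 0 < v < 1 -> v <= exp (/2) * exp (- W v).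
Proof.
  intros Hv. rewrite <- exp_plus. rewrite <- (exp_ln v) at 1 by lra.
  assert (H : W v ^ 2 <= - 2 * ln v).
  { rewrite W_sq by auto. unfold hh. lra. }
  pose proof (pow2_ge_0 (W v - 1)).
  assert (Hk : ln v <= / 2 + - W v) by nra.
  destruct (Rle_lt_or_eq_dec _ _ Hk) as [Hl|He].
  - left; apply exp_increasing; lra.
  - rewrite He; lra.
Qed.

Lemma Derive_Derive_u0 : Derive (Derive u0) = fun xi => V xi * W (V xi).
Proof. rewrite Derive_u0. apply functional_extensionality. intros; apply Derive_V. Qed.

Lemma existence : Prop_u u0.
Proof.
  split; [|split; [|split]].
  - split; [|split].
    + intros x. exists (V x). apply u0_deriv.
    + intros x. rewrite Derive_u0. exists (V x * W (V x)). apply V_deriv.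
    + intros x. rewrite Derive_Derive_u0. apply continuity_pt_filterlim.
      pose proof (V_range x).
      eapply deriv_cont_pt. apply (is_derive_mult V (fun y => W (V y))).
      apply V_deriv. apply (is_derive_comp W V). apply W_deriv; auto. apply V_deriv.
      intros; apply Rmult_comm.
  - intros x y Hxy. apply (incr_function u0 m_infty p_infty V); simpl; auto.
    intros t _ _. apply u0_deriv. intros t _ _. apply V_range.
  - intros xi. rewrite Derive_Derive_u0, Derive_u0, u0_minus. ring.
  - set (v0 := V 0). set (w0 := W v0).
    assert (Hv0 : 0 < v0 < 1) by apply V_range.
    assert (Hw0 : 0 < w0) by (apply W_pos; auto).
    exists 1, (2 * exp (/2) / w0 + 2 / v0).
    assert (P1 : 0 < 2 * exp (/2) / w0).
    { unfold Rdiv. apply Rmult_lt_0_compat. pose proof (exp_pos (/2)). lra. apply Rinv_0_lt_compat; lra. }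
    assert (P2 : 0 < 2 / v0).
    { unfold Rdiv. apply Rmult_lt_0_compat. lra. apply Rinv_0_lt_compat; lra. }
    split; [lra|split; [lra|]].
    intros xi. pose proof (V_range xi) as Hv. set (v := V xi) in *.
    assert (Hxi : xi = U v - W v) by (unfold v; rewrite <- (XV xi) at 1; reflexivity).
    pose proof (W_pos v Hv) as HWv.
    destruct (Rle_dec xi 0) as [Hn|Hp].
    + rewrite Rmax_left by lra. rewrite Rabs_left1 by lra.
      replace (- (1) * - xi) with xi by ring.
      unfold u0. fold v. split. apply U_pos; auto.
      assert (Hvv0 : v <= v0) by (apply V_le; lra).
      assert (HWw : w0 <= W v) by (apply W_le; lra).
      pose proof (U_le_vq v Hv).
      pose proof (v_le_exp v Hv).
      assert (exp (- W v) <= exp xi).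
      { pose proof (U_nonneg v ltac:(lra)).
        destruct (Req_dec (- W v) xi) as [E|E]. rewrite E; lra. left; apply exp_increasing; lra. }
      assert (v / W v <= v / w0).
      { unfold Rdiv. apply Rmult_le_compat_l. lra. apply Rinv_le_contravar; lra. }
      assert (v / w0 <= exp (/ 2) * exp xi / w0).
      { unfold Rdiv. apply Rmult_le_compat_r. left; apply Rinv_0_lt_compat; lra.
        pose proof (exp_pos (/2)). nra. }
      assert (exp (/ 2) * exp xi / w0 < 2 * exp (/ 2) / w0 * exp xi).
      { unfold Rdiv. pose proof (exp_pos xi). pose proof (exp_pos (/2)).
        assert (0 < / w0) by (apply Rinv_0_lt_compat; lra).
        assert (0 < exp (/2) * exp xi * / w0) by (repeat apply Rmult_lt_0_compat; lra).
        nra. }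
      pose proof (exp_pos xi). nra.
    + rewrite Rmax_right by lra. rewrite Rabs_right by lra.
      unfold u0. fold v.
      assert (Hvv0 : v0 <= v) by (apply V_le; lra).
      assert (HU := U_le_log v ltac:(lra)).
      set (E := exp (- (1) * xi)).
      assert (HE : 1 - v <= E).
      { unfold E. rewrite <- (exp_ln (1 - v)) by lra.
        assert (ln (1 - v) <= - (1) * xi) by lra.
        destruct (Req_dec (ln (1 - v)) (- (1) * xi)) as [Eq|Eq]. rewrite Eq; lra.
        left; apply exp_increasing; lra. }
      assert (HW2 : W v ^ 2 <= (1 - v)^2 / v0).
      { apply Rle_trans with ((1 - v)^2 / v). apply W_sq_le; auto.
        unfold Rdiv. apply Rmult_le_compat_l. apply pow2_ge_0. apply Rinv_le_contravar; lra. }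
      assert (HW3 : W v <= E / v0).
      { assert (0 < / v0) by (apply Rinv_0_lt_compat; lra).
        assert (1 <= / v0). { rewrite <- Rinv_1. apply Rinv_le_contravar; lra. }
        assert ((1 - v)^2 / v0 <= (E / v0)^2).
        { unfold Rdiv. replace ((E * / v0)^2) with (E^2 * (/v0 * /v0)) by ring.
          apply Rmult_le_compat. apply pow2_ge_0. lra. nra. nra. }
        assert (0 <= E / v0) by (unfold Rdiv; apply Rmult_le_pos; [unfold E; left; apply exp_pos| lra]).
        nra. }
      assert (0 < E) by (unfold E; apply exp_pos).
      assert (E / v0 < (2 * exp (/ 2) / w0 + 2 / v0) * E).
      { unfold Rdiv in *. assert (0 < / v0) by (apply Rinv_0_lt_compat; lra). nra. }
      split; lra.
Qed.

Lemma mvt_le (f df : R -> R) a b K : (forall x, is_derive f x (df x)) -> a <= b ->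
  (forall x, a <= x <= b -> df x <= K) -> f b - f a <= K * (b - a).
Proof.
  intros Hd Hab HK.
  destruct (MVT_gen f a b df) as [c [Hc Heq]].
  - intros x _. apply Hd.
  - intros x _. eapply deriv_cont_pt. apply Hd.
  - rewrite Rmin_left, Rmax_right in Hc by lra. rewrite Heq.
    apply Rmult_le_compat_r. lra. apply HK; lra.
Qed.

Lemma mvt_ge (f df : R -> R) a b K : (forall x, is_derive f x (df x)) -> a <= b ->
  (forall x, a <= x <= b -> K <= df x) -> K * (b - a) <= f b - f a.
Proof.
  intros Hd Hab HK.
  pose proof (mvt_le (fun x => - f x) (fun x => - df x) a b (- K)) as H.
  assert (- f b - - f a <= - K * (b - a)); [|lra].
  apply H; auto. intros x. apply (is_derive_opp f). apply Hd.
  intros x Hx. specialize (HK x Hx). lra.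
Qed.

Lemma deriv0_const (f : R -> R) : (forall x, is_derive f x 0) -> forall x, f x = f 0.
Proof.
  intros Hd x.
  destruct (Rle_dec 0 x).
  - pose proof (mvt_le f (fun _ => 0) 0 x 0 Hd r (fun _ _ => Rle_refl 0)).
    pose proof (mvt_ge f (fun _ => 0) 0 x 0 Hd r (fun _ _ => Rle_refl 0)). lra.
  - pose proof (mvt_le f (fun _ => 0) x 0 0 Hd ltac:(lra) (fun _ _ => Rle_refl 0)).
    pose proof (mvt_ge f (fun _ => 0) x 0 0 Hd ltac:(lra) (fun _ _ => Rle_refl 0)). lra.
Qed.

Lemma small_exp c C m : 0 < c -> 0 < C -> 0 < m ->
  exists T, forall y, T <= y -> C * exp (- c * y) < m.
Proof.
  intros Hc HC Hm.
  exists ((Rabs (ln (m / C)) + 1) / c). intros y Hy.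
  assert (Hcy : Rabs (ln (m / C)) + 1 <= c * y).
  { apply Rmult_le_compat_l with (r := c) in Hy; [|lra].
    replace (c * ((Rabs (ln (m / C)) + 1) / c)) with (Rabs (ln (m / C)) + 1) in Hy by (field; lra).
    exact Hy. }
  pose proof (Rle_abs (- ln (m / C))). rewrite Rabs_Ropp in H.
  assert (exp (- c * y) < exp (ln (m / C))) by (apply exp_increasing; lra).
  rewrite exp_ln in H0 by (unfold Rdiv; apply Rmult_lt_0_compat; [lra|apply Rinv_0_lt_compat; lra]).
  apply Rmult_lt_compat_l with (r := C) in H0; [|lra].
  replace (C * (m / C)) with m in H0 by (field; lra). exact H0.
Qed.

Lemma ln_lower d : 0 < d -> 1 - / d <= ln d.
Proof.
  intros Hd. pose proof (exp_ineq1_le (- ln d)).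
  rewrite exp_Ropp, exp_ln in H by lra. lra.
Qed.

Lemma uniqueness (u2 : R -> R) : Prop_u u2 -> u0 = u2.
Proof.
  intros [[Hd1 [Hd2 _]] [Hinc [Hode [c [C [Hc [HC Hb]]]]]]].
  set (d := Derive u2).
  assert (Hd : forall x, is_derive u2 x (d x)) by (intros; apply Derive_correct, Hd1).
  assert (Hdd : forall x, is_derive d x ((u2 x - x) * d x)).
  { intros x. rewrite <- Hode. apply Derive_correct, Hd2. }
  assert (Hg : forall x, 0 < u2 x - x).
  { intros x. destruct (Hb x) as [H _]. pose proof (Rmax_r 0 x). lra. }
  set (g := fun x => u2 x - x).
  assert (Hgd : forall x, is_derive g x (d x - 1)).
  { intros x. unfold g. apply is_derive_eq with (minus (d x) 1).
    apply (is_derive_minus u2 (fun x => x)). apply Hd. apply is_derive_Reals, derivable_pt_lim_id.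
    reflexivity. }
  assert (Hdpos : forall x, 0 < d x).
  { set (A := fun x => RInt g 0 x).
    assert (Hgc : forall x, continuous g x).
    { intros x. apply continuity_pt_filterlim. eapply deriv_cont_pt. apply Hgd. }
    assert (HA : forall x, is_derive A x (g x)).
    { intros x. apply (is_derive_RInt g A 0 x).
      apply filter_forall. intros b. unfold A.
      apply (RInt_correct (V:=R_CompleteNormedModule)).
      apply (ex_RInt_continuous (V:=R_CompleteNormedModule)). intros; apply Hgc.
      apply Hgc. }
    set (z := fun x => d x * exp (- A x)).
    assert (Hz : forall x, is_derive z x 0).
    { intros x. unfold z.
      apply is_derive_eq with (plus (mult ((u2 x - x) * d x) (exp (- A x))) (mult (d x) (scal (opp (g x)) (exp (- A x))))).
      apply (is_derive_mult d (fun x => exp (- A x))). apply Hdd.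
      apply (is_derive_comp exp (fun x => - A x)). apply is_derive_Reals, derivable_pt_lim_exp.
      apply (is_derive_opp A). apply HA.
      intros; apply Rmult_comm.
      unfold plus, mult, scal, opp; simpl. unfold mult; simpl. unfold g. fixeq. ring. }
    pose proof (deriv0_const z Hz) as Hzc.
    intros x.
    assert (Hdx : forall y, d y = z 0 * exp (A y)).
    { intros y. rewrite <- (Hzc y). unfold z. rewrite Rmult_assoc, <- exp_plus.
      replace (- A y + A y) with 0 by ring. rewrite exp_0. ring. }
    destruct (Rle_dec (z 0) 0) as [Hz0|Hz0].
    - exfalso.
      pose proof (mvt_le u2 d 0 1 0 Hd ltac:(lra)) as H.
      assert (u2 1 - u2 0 <= 0 * (1 - 0)).
      { apply H. intros y _. rewrite Hdx. pose proof (exp_pos (A y)). nra. }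
      pose proof (Hinc 0 1 ltac:(lra)). lra.
    - rewrite Hdx. apply Rmult_lt_0_compat. lra. apply exp_pos. }
  assert (Hdinc : forall x y, x < y -> d x < d y).
  { intros x y Hxy. apply (incr_function d m_infty p_infty (fun x => (u2 x - x) * d x)); simpl; auto.
    intros t _ _. apply Rmult_lt_0_compat; auto. }
  assert (Hgbound : forall y, 0 <= y -> g y < C * exp (- c * y)).
  { intros y Hy. destruct (Hb y) as [_ H]. rewrite Rmax_right, Rabs_right in H by lra.
    unfold g. lra. }
  assert (Hdlt1 : forall x, d x < 1).
  { intros x0. destruct (Rlt_le_dec (d x0) 1) as [H|H]; auto. exfalso.
    set (x1 := x0 + 1).
    destruct (small_exp c C (g x1) Hc HC (Hg x1)) as [T HT].
    set (y := Rmax x1 (Rmax T 0)).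
    assert (Hy1 : x1 <= y) by apply Rmax_l.
    assert (HyT : T <= y) by (eapply Rle_trans; [apply Rmax_l|apply Rmax_r]).
    assert (Hy0 : 0 <= y) by (eapply Rle_trans; [apply Rmax_r|apply Rmax_r]).
    pose proof (mvt_ge g (fun x => d x - 1) x1 y 0 Hgd Hy1) as Hm.
    assert (0 * (y - x1) <= g y - g x1).
    { apply Hm. intros t Ht. pose proof (Hdinc x0 t ltac:(unfold x1 in *; lra)). lra. }
    pose proof (HT y HyT). pose proof (Hgbound y Hy0). lra. }
  set (H := fun x => / 2 * (g x * g x) - d x + ln (d x)).
  assert (HH : forall x, is_derive H x 0).
  { intros x. unfold H.
    apply is_derive_eq with (plus (minus (/ 2 * (plus (mult (d x - 1) (g x)) (mult (g x) (d x - 1)))) ((u2 x - x) * d x)) (scal ((u2 x - x) * d x) (/ d x))).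
    apply (is_derive_plus (fun x => / 2 * (g x * g x) - d x) (fun x => ln (d x))).
    apply (is_derive_minus (fun x => / 2 * (g x * g x)) d).
    apply is_derive_scal. apply (is_derive_mult g g). apply Hgd. apply Hgd. intros; apply Rmult_comm.
    apply Hdd.
    apply (is_derive_comp ln d). apply is_derive_ln. apply Hdpos. apply Hdd.
    unfold minus, plus, mult, scal, opp; simpl. unfold plus, mult, opp; simpl. unfold g. fixeq.
    field. pose proof (Hdpos x). lra. }
  pose proof (deriv0_const H HH) as HHc.
  assert (Hclose : forall eps, 0 < eps < / 4 -> exists x, g x < eps /\ 1 - eps < d x).
  { intros eps Heps.
    destruct (small_exp c C eps Hc HC ltac:(lra)) as [T HT].
    set (T' := Rmax T 0).
    assert (HT1 : T <= T') by apply Rmax_l. assert (HT0 : 0 <= T') by apply Rmax_r.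
    destruct (classic (exists x, T' <= x /\ 1 - eps < d x)) as [[x [Hx1 Hx2]]|Hno].
    - exists x. split; auto. pose proof (Hgbound x ltac:(lra)). pose proof (HT x ltac:(lra)). lra.
    - exfalso.
      set (s := g T' / eps + 1).
      assert (Hs : 0 < s). { unfold s. pose proof (Hg T'). assert (0 < g T' / eps) by (unfold Rdiv; apply Rmult_lt_0_compat; [exact H0|apply Rinv_0_lt_compat; lra]). lra. }
      pose proof (mvt_le g (fun x => d x - 1) T' (T' + s) (- eps) Hgd ltac:(lra)) as Hm.
      assert (Hm2 : g (T' + s) - g T' <= - eps * (T' + s - T')).
      { apply Hm. intros t Ht. destruct (Rle_dec (d t) (1 - eps)) as [Hle|Hgt]. lra.
        exfalso. apply Hno. exists t. split; lra. }
      replace (T' + s - T') with s in Hm2 by ring.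
      assert (eps * s = g T' + eps) by (unfold s; field; lra).
      pose proof (Hg (T' + s)) as Hpos. change (0 < g (T' + s)) in Hpos. lra. }
  assert (Hh : forall x, H x = -1).
  { intros x. rewrite (HHc x). clear x.
    destruct (Req_dec (H 0) (-1)) as [E|E]; auto. exfalso.
    set (eps := Rmin (/ 8) (Rabs (H 0 + 1) / 4)).
    assert (Heps : 0 < eps <= Rabs (H 0 + 1) / 4).
    { split. unfold eps. apply Rmin_glb_lt. lra. assert (0 < Rabs (H 0 + 1)) by (apply Rabs_pos_lt; lra). lra.
      apply Rmin_r. }
    assert (Heps2 : eps <= / 8) by apply Rmin_l.
    destruct (Hclose eps ltac:(lra)) as [x [Hx1 Hx2]].
    rewrite <- (HHc x) in Heps. unfold H in Heps.
    pose proof (Hg x). pose proof (Hdlt1 x). pose proof (Hdpos x).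
    pose proof (ln_lower (d x) H2).
    assert (ln (d x) < 0) by (rewrite <- ln_1; apply ln_increasing; lra).
    assert (/ d x < 2). { rewrite <- (Rinv_inv 2). apply Rinv_lt_contravar. lra. lra. }
    assert (1 - / d x >= - 2 * (1 - d x)).
    { assert (1 - / d x = - (1 - d x) * / d x) by (field; lra). rewrite H6.
      assert (0 < / d x) by (apply Rinv_0_lt_compat; lra). nra. }
    fold g in Heps. unfold g in Heps.
    assert (Hgx : (u2 x - x) * (u2 x - x) < eps * eps). { unfold g in Hx1. nra. }
    destruct (Rle_dec 0 (/ 2 * ((u2 x - x) * (u2 x - x)) - d x + ln (d x) + 1)) as [Hpos|Hneg].
    + rewrite Rabs_right in Heps by lra. nra.
    + rewrite Rabs_left in Heps by lra. nra. }
  assert (HgW : forall x, g x = W (d x)).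
  { intros x. pose proof (Hh x) as E. unfold H in E.
    unfold W, hh. replace (2 * (d x - 1 - ln (d x))) with (g x ^ 2) by (simpl; lra).
    rewrite sqrt_pow2. reflexivity. left; apply Hg. }
  set (K := fun x => U (d x) - u2 x).
  assert (HK : forall x, is_derive K x 0).
  { intros x. unfold K.
    pose proof (Hdpos x). pose proof (Hdlt1 x).
    apply is_derive_eq with (minus (scal ((u2 x - x) * d x) (q (d x))) (d x)).
    apply (is_derive_minus (fun x => U (d x)) u2).
    apply (is_derive_comp U d). apply U_deriv; auto. apply Hdd. apply Hd.
    unfold minus, plus, scal, opp, mult; simpl. unfold plus, mult, opp; simpl. fixeq.
    pose proof (qW (d x) ltac:(lra)). rewrite <- HgW in H2. unfold g in H2.
    replace ((u2 x - x) * d x * q (d x) + - d x) with (d x * (q (d x) * (u2 x - x) - 1)) by ring.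
    rewrite H2. ring. }
  pose proof (deriv0_const K HK) as HKc.
  set (k := K 0).
  assert (Hu2 : forall x, u2 x = u0 (x + k) - k).
  { intros x.
    assert (Hx : X (d x) = x + k).
    { unfold X. rewrite <- HgW. unfold k. rewrite <- (HKc x). unfold K, g. ring. }
    assert (Hdv : d x = V (x + k)).
    { rewrite <- Hx. symmetry. apply VX. split; [apply Hdpos|apply Hdlt1]. }
    unfold u0. rewrite <- Hdv. unfold k. rewrite <- (HKc x). unfold K. ring. }
  destruct existence as [_ [_ [_ [c1 [C1 [Hc1 [HC1 Hb1]]]]]]].
  assert (Hk : k = 0).
  { destruct (Rtotal_order k 0) as [Hneg|[Hz|Hpos]]; auto; exfalso.
    - destruct (small_exp c C (- k) Hc HC ltac:(lra)) as [T HT].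
      set (y := Rmax T 0).
      assert (HyT : T <= y) by apply Rmax_l. assert (Hy0 : 0 <= y) by apply Rmax_r.
      destruct (Hb (- y)) as [_ H1]. rewrite Rmax_left, Rabs_Ropp, Rabs_right in H1 by lra.
      destruct (Hb1 (- y + k)) as [H2 _]. pose proof (Rmax_l 0 (- y + k)).
      rewrite Hu2 in H1. pose proof (HT y HyT). lra.
    - destruct (small_exp c1 C1 k Hc1 HC1 ltac:(lra)) as [T HT].
      set (y := Rmax T 0).
      assert (HyT : T <= y) by apply Rmax_l. assert (Hy0 : 0 <= y) by apply Rmax_r.
      destruct (Hb1 (- y)) as [_ H1]. rewrite Rmax_left, Rabs_Ropp, Rabs_right in H1 by lra.
      destruct (Hb (- y - k)) as [H2 _]. pose proof (Rmax_l 0 (- y - k)).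
      rewrite Hu2 in H2. replace (- y - k + k) with (- y) in H2 by ring.
      pose proof (HT y HyT). lra. }
  apply functional_extensionality. intros x. rewrite Hu2, Hk. rewrite Rplus_0_r, Rminus_0_r. reflexivity.
Qed.
Theorem proposition1p3 :
  exists! u : R -> R,
    C2 u /\
    (forall x y, x < y -> u x < u y) /\
    (forall xi, Derive (Derive u) xi = (u xi - xi) * Derive u xi) /\
    (exists c C, 0 < c /\ 0 < C /\
       forall xi, Rmax 0 xi < u xi /\ u xi < Rmax 0 xi + C * exp (- c * Rabs xi)).
Proof.
  exists u0. split.
  - exact existence.
  - intros u2 H. apply uniqueness. exact H.
Qed.
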